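(* Let $n>s\geq 1$ be integers and let ${\bm r}=(r_0,\dots,r_s)\in\mathbb{R}^{s+1}$ be such that $g_{\bm r}(x)=\sum_{k=0}^{s} r_k x^k$ is a separable polynomial of degree $s$ (so $r_s\neq 0$) with exactly $\gamma$ real roots ($0\le\gamma\le s$). For $t$ an indeterminate, let $f_{\bm r}(t;x)=x^n+t\,g_{\bm r}(x)\in\mathbb{R}(t)[x]$, and let $$P_{\bm r}(t)=\det M_n\big(f_{\bm r}(t;x),\,f'_{\bm r}(t;x)\big)\in\mathbb{R}[t],$$ where $f'_{\bm r}$ is the derivative with respect to $x$. Let $\alpha_{\bm r}=\max\{\alpha\in\mathbb{R}\mid P_{\bm r}(\alpha)=0\}$. Then for every real $\xi>\alpha_{\bm r}$, the number $N_{f_{\bm r}(\xi;x)}$ of distinct real roots of $f_{\bm r}(\xi;x)=x^n+\xi g_{\bm r}(x)$ equals $$N_{f_{\bm r}(\xi;x)}=\begin{cases}\gamma+1 & \text{if } n-s \text{ is odd},\\ \gamma & \text{if } n-s \text{ is even and } r_s>0,\\ \gamma+2 & \text{if } n-s \text{ is even and } r_s<0.\end{cases}$$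
   Context: Bezoutian: for polynomials $f_1,f_2$ over a field $F$ of characteristic $0$ and an integer $n\ge\max\{\deg f_1,\deg f_2\}$, write $\frac{f_1(x)f_2(y)-f_1(y)f_2(x)}{x-y}=\sum_{i,j=1}^n\alpha_{ij}x^{n-i}y^{n-j}\in F[x,y]$ and set $M_n(f_1,f_2)=(\alpha_{ij})_{1\le i,j\le n}$, a symmetric $n\times n$ matrix. For a real polynomial $h$, $N_h$ denotes the number of distinct real roots of $h$. Note $P_{\bm r}(0)=0$ since $f_{\bm r}(0;x)=x^n$. *)

(* Defs.v *)
From HB Require Import structures.
From mathcomp Require Import all_boot all_order all_algebra all_field.
Set Implicit Arguments. Unset Strict Implicit. Unset Printing Implicit Defensive.
Import Order.TTheory GRing.Theory Num.Theory.
Local Open Scope ring_scope.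

(* Bivariate polynomials: an element of {poly {poly R}} is read as a
   polynomial in y (outer variable) whose coefficients are polynomials in x
   (inner variable).  For f : {poly R}, f%:P is f(x) and f^:P is f(y). *)

(* (f1(x) f2(y) - f1(y) f2(x)) / (x - y); note x - y = -('X - ('X)%:P),
   and 'X - ('X)%:P is monic in y, so the division is exact. *)
Definition bezout_quot (R : idomainType) (f1 f2 : {poly R}) : {poly {poly R}} :=
  - ((f1%:P * f2^:P - f1^:P * f2%:P) %/ ('X - ('X)%:P)).

(* M_n(f1,f2) = (alpha_ij), alpha_ij = coefficient of x^(n-i) y^(n-j),
   1 <= i,j <= n; here indices i j : 'I_n stand for i+1, j+1. *)
Definition bezoutian (R : idomainType) (n : nat) (f1 f2 : {poly R}) : 'M[R]_n :=
  \matrix_(i < n, j < n) ((bezout_quot f1 f2)`_(n.-1 - j))`_(n.-1 - i).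

(* f_r(t;x) = x^n + t g_r(x), as a polynomial in x with coefficients in R[t]. *)
Definition f_r (R : idomainType) (n : nat) (g : {poly R}) : {poly {poly R}} :=
  'X^n + ('X)%:P * g^:P.

Definition P_r (R : idomainType) (n : nat) (g : {poly R}) : {poly R} :=
  \det (bezoutian n (f_r n g) (f_r n g)^`()).

Definition num_real_roots (R : idomainType) (h : {poly R}) (k : nat) : Prop :=
  exists s : seq R, [/\ uniq s, (forall x, root h x = (x \in s)) & size s = k].

(* Main.v *)
Require Import Defs.
From HB Require Import structures.
From mathcomp Require Import all_boot all_order all_algebra all_field.
From mathcomp Require Import zify ring lra polyrcf.
Import Order.TTheory GRing.Theory Num.Theory.
Local Open Scope ring_scope.

Lemma bq_mul (R : idomainType) (f1 f2 : {poly R}) :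
  bezout_quot f1 f2 * ('X - ('X)%:P) = - (f1%:P * f2^:P - f1^:P * f2%:P).
Proof.
set N := (f1%:P * f2^:P - f1^:P * f2%:P).
have : root N 'X.
  rewrite /root /N hornerD hornerN !hornerM !hornerC.
  rewrite -!/(comp_poly _ _) !comp_polyXr.
  by rewrite mulrC subrr.
case/factor_theorem => q Nq.
by rewrite /bezout_quot -/N Nq Pdiv.IdomainMonic.mulpK ?monicXsubC // mulNr.
Qed.

Lemma bq_size (R : idomainType) (n : nat) (f1 f2 : {poly R}) :
  (size f1 <= n.+1)%N -> (size f2 <= n.+1)%N ->
  (size (bezout_quot f1 f2) <= n)%N.
Proof.
move=> s1 s2.
have hN : (size (f1%:P * f2^:P - f1^:P * f2%:P)%R <= n.+1)%N.
  rewrite (leq_trans (size_add _ _)) // geq_max size_opp.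
  rewrite (mulrC f1^:P) !mul_polyC !(leq_trans (size_scale_leq _ _)) //.
  by rewrite size_map_polyC.
  by rewrite size_map_polyC.
have := @bq_mul _ f1 f2.
set Q := bezout_quot f1 f2 => HQ.
have [->|Q0] := eqVneq Q 0; first by rewrite size_poly0.
move: hN; rewrite -size_opp -HQ size_Mmonic ?monicXsubC // size_XsubC addn2 /=.
by [].
Qed.

Lemma map_polyC_comm (aR rR : nzRingType) (f : {rmorphism aR -> rR}) (p : {poly aR}) :
  map_poly (map_poly f) (p^:P) = (map_poly f p)^:P.
Proof.
rewrite -!map_poly_comp; apply: eq_map_poly => x /=.
by rewrite map_polyC.
Qed.

Lemma bez_root (R : fieldType) (n : nat) (g : {poly R}) (t a : R) :
  (0 < n)%N -> (size g <= n)%N ->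
  root ('X^n + t *: g) a -> root ('X^n + t *: g)^`() a -> root (P_r n g) t.
Proof.
move=> n0 sg rf rf'.
have [n' En] : exists n', n = n'.+1 by case: n n0 {sg rf rf'} => // n' _; exists n'.
set Fr := f_r n g.
have sF : (size Fr <= n.+1)%N.
  rewrite /Fr /f_r (leq_trans (size_add _ _)) // geq_max size_polyXn leqnn /=.
  rewrite mul_polyC (leq_trans (size_scale_leq _ _)) // size_map_polyC.
  by rewrite (leq_trans sg).
have sF' : (size Fr^`() <= n.+1)%N.
  have [->|F0] := eqVneq Fr 0; first by rewrite deriv0 size_poly0.
  by rewrite (leq_trans _ sF) // ltnW // lt_size_deriv.
have sQ := @bq_size _ _ _ _ sF sF'.
set Q := bezout_quot Fr Fr^`() in sQ.
set f := 'X^n + t *: g in rf rf'.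
have hf : map_poly (horner_eval t) Fr = f.
  rewrite /Fr /f_r rmorphD rmorphM /= map_polyXn map_polyC /= horner_evalE hornerX.
  rewrite -map_poly_comp (eq_map_poly (fun x => hornerC x t)) map_poly_id //.
  by rewrite mul_polyC.
have hf' : map_poly (horner_eval t) Fr^`() = f^`() by rewrite -hf deriv_map.
pose ev : {rmorphism {poly {poly {poly R}}} -> {poly {poly R}}} :=
  map_poly (map_poly (horner_eval t)).
have bq : Q * ('X - ('X)%:P) = -(Fr%:P * Fr^`()^:P - Fr^:P * Fr^`()%:P) :=
  @bq_mul _ Fr Fr^`().
have E : ev Q * ('X - ('X)%:P) = - (f%:P * (f^`())^:P - f^:P * (f^`())%:P).
  have e1 : ev ('X - ('X)%:P) = 'X - ('X)%:P.
    by rewrite rmorphB /= map_polyX map_polyC /= map_polyX.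
  rewrite -e1 -rmorphM bq.
  rewrite rmorphN rmorphB !rmorphM /= !map_polyC /=.
  by rewrite !map_polyC_comm hf hf'.
have Qa : (ev Q).[a%:P] = 0.
  have := congr1 (fun p => p.[a%:P]) E => /=.
  rewrite hornerM hornerXsubC hornerN hornerD hornerN !hornerM !hornerC.
  rewrite !horner_map /= (rootP rf) (rootP rf') !mulr0 mul0r subrr oppr0.
  move/eqP; rewrite mulf_eq0 => /orP[/eqP //|].
  rewrite subr_eq0 => /eqP /(congr1 (fun p : {poly R} => size p)).
  by rewrite size_polyX size_polyC; case: (a != 0).
subst n.
have sQ' : (size (ev Q) <= n'.+1)%N by rewrite /ev /= /map_poly (leq_trans (size_poly _ _)).
rewrite /root /P_r -horner_evalE -det_map_mx -det_tr; apply/det0P.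
exists (\row_(j < n'.+1) a ^+ (n' - j)).
  apply/eqP => /matrixP /(_ 0 ord_max); rewrite !mxE subnn expr0 => /eqP.
  by rewrite oner_eq0.
apply/rowP => i; rewrite !mxE.
have := congr1 (fun p : {poly R} => p`_(n' - i)) Qa.
rewrite (horner_coef_wide _ sQ') coef_sum coef0 => H; apply: (etrans _ H).
rewrite (reindex_inj rev_ord_inj) /=; apply: eq_bigr => j _.
rewrite !mxE /= -rmorphXn coefMC /ev !coef_map /= horner_evalE mulrC.
by rewrite subSS subKn ?horner_evalE // -ltnS ltn_ord.
Qed.
Local Notation mid x y := ((x + y) / 2).

Lemma sgr_right {R : rcfType} {p : {poly R}} {u y : R} : u < y ->
  (forall z, u < z <= y -> ~~ root p z) -> root p u -> p^`().[u] != 0 ->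
  Num.sg p.[y] = Num.sg p^`().[u].
Proof.
move=> uy nr ru d0.
have p0 : p != 0 by apply: contra_neq d0 => ->; rewrite deriv0 horner0.
have ng := next_root_gt uy p0.
have ni := next_root_in p u y.
set m := mid u (next_root p u y).
have mI : m \in neighpr p u y by rewrite /neighpr mid_in_itvoo.
rewrite -(sgp_rightNroot d0) -sgp_right_deriv // -(sgr_neighpr mI).
have ny : next_root p u y <= y.
  move: ni; rewrite in_itv /= => /andP[_]. rewrite (max_idPl (ltW uy)). done.
apply: (polyrN0_itv (i:=`]u, y]) (p:=p)).
- by move=> z; rewrite in_itv /= => /nr.
- rewrite in_itv /=; move: mI; rewrite /neighpr in_itv /= => /andP[-> /ltW].
  by move/le_trans; apply.
- by rewrite in_itv /= lexx uy.
Qed.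

Lemma sgr_left {R : rcfType} {p : {poly R}} {y v : R} : y < v ->
  (forall z, y <= z < v -> ~~ root p z) -> root p v -> p^`().[v] != 0 ->
  Num.sg p.[y] = - Num.sg p^`().[v].
Proof.
move=> yv nr rv d0.
set q := p \Po - 'X.
have qE x : q.[x] = p.[- x] by rewrite /q horner_comp !hornerE.
have q'E x : q^`().[x] = - p^`().[- x].
  by rewrite /q deriv_comp !hornerE horner_comp !hornerE derivN derivX hornerN hornerC mulrN1.
have := @sgr_right R q (- v) (- y).
rewrite !qE q'E !opprK sgrN; apply.
- by rewrite ltrN2.
- move=> z /andP[z1 z2]; rewrite /root qE; apply: nr.
  by rewrite lerNr z2 /= ltrNl.
- by rewrite /root qE opprK.
- by rewrite oppr_eq0.
Qed.

Section Main.
Variables (R : rcfType) (n s : nat) (g : {poly R}) (xi : R).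
Hypotheses (s1 : (1 <= s)%N) (sn : (s < n)%N) (sg : size g = s.+1).

Let F := 'X^n + xi *: g.
Let H := F * g.
Let W := F^`() * g - F * g^`().
Let K := n%:R *: g - 'X * g^`().

Lemma g0 : g != 0.
Proof. by rewrite -size_poly_eq0 sg. Qed.

Lemma rs0 : lead_coef g != 0.
Proof. by rewrite lead_coef_eq0 g0. Qed.

Lemma F_size_lead : size F = n.+1 /\ lead_coef F = 1.
Proof.
have h : (size (xi *: g) < size ('X^n : {poly R}))%N.
  by rewrite size_polyXn (leq_ltn_trans (size_scale_leq _ _)) // sg ltnS.
by rewrite /F size_addl // lead_coefDl // size_polyXn lead_coefXn.
Qed.

Lemma F0 : F != 0.
Proof. by rewrite -size_poly_eq0 (proj1 F_size_lead). Qed.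

Lemma H_size_lead : size H = (n + s).+1 /\ lead_coef H = lead_coef g.
Proof.
rewrite /H size_mul ?F0 ?g0 // lead_coefM (proj2 F_size_lead) mul1r.
by rewrite (proj1 F_size_lead) sg addSn addnS.
Qed.

Lemma H0 : H != 0.
Proof. by rewrite -size_poly_eq0 (proj1 H_size_lead). Qed.

Lemma W_eq : W = 'X^(n.-1) * K.
Proof.
rewrite /W /K /F derivD derivXn derivZ.
have -> : ('X^n : {poly R}) = 'X * 'X^(n.-1).
  by rewrite -exprS prednK // (leq_ltn_trans _ sn).
rewrite -mulr_natl -!mul_polyC. ring.
Qed.

Lemma K_poly : K = \poly_(i < s.+1) ((n%:R - i%:R) * g`_i).
Proof.
apply/polyP => i; rewrite coef_poly /K coefB coefZ coefXM coef_deriv.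
case: ltnP => hi.
  case: i hi => [|i] hi /=; first by rewrite !subr0.
  rewrite -mulr_natr; ring.
rewrite [g`_i]nth_default ?sg // mulr0.
case: i hi => [//|i] hi /=.
by rewrite [g`_i.+1]nth_default ?sg // mul0rn subrr.
Qed.

Lemma K_size_lead : size K = s.+1 /\ lead_coef K = (n%:R - s%:R) * lead_coef g.
Proof.
have ne : (n%:R - s%:R) * lead_coef g != 0 :> R.
  rewrite mulf_neq0 ?rs0 // subr_eq0 eqr_nat; lia.
have ne' : (n%:R - (s.+1).-1%:R) * g`_(s.+1).-1 != 0 :> R.
  by move: ne; rewrite lead_coefE sg.
rewrite K_poly size_poly_eq // lead_coef_poly // /=.
by rewrite lead_coefE sg.
Qed.

Lemma W_size_lead : size W = (n + s)%N /\ lead_coef W = (n%:R - s%:R) * lead_coef g.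
Proof.
have K0 : K != 0 by rewrite -size_poly_eq0 (proj1 K_size_lead).
rewrite W_eq size_mul ?K0 ?monic_neq0 ?monicXn // size_polyXn (proj1 K_size_lead).
rewrite lead_coefM lead_coefXn mul1r (proj2 K_size_lead); split => //.
have := sn; case: n => // n' _ /=; lia.
Qed.


Hypothesis hP : forall a : R, root (P_r n g) a -> a < xi.
Hypothesis sepg : separable_poly g.

Lemma sgn : (size g <= n)%N. Proof. by rewrite sg. Qed.

Lemma Fder : F^`() = 'X^(n.-1) *+ n + xi *: g^`().
Proof. by rewrite /F derivD derivXn derivZ. Qed.

Lemma xi_gt0 : 0 < xi.
Proof.
apply: hP; apply: (@bez_root _ n g 0 0); first by lia.
- exact: sgn.
- by rewrite /root scale0r addr0 hornerXn expr0n; case: n sn.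
rewrite /root scale0r addr0 derivXn hornerMn hornerXn expr0n.
have -> : (n.-1 == 0%N) = false by apply/negbTE; lia.
by rewrite mul0rn.
Qed.

Lemma noDouble b : root F b -> F^`().[b] != 0.
Proof.
move=> rb; apply/negP => /eqP d0.
have r' : root F^`() b by rewrite /root d0.
have := hP xi (@bez_root _ n g xi b (leq_ltn_trans (leq0n _) sn) sgn rb r').
by rewrite ltxx.
Qed.

Lemma Kpos c : root W c -> g.[c] != 0 -> 0 < H.[c].
Proof.
move=> /rootP Wc G0.
set G := g.[c] in G0 *.
set G' := g^`().[c].
set A := c ^+ n.
set D := c ^+ n.-1 *+ n.
have eW : D * G = A * G'.
  move: Wc; rewrite /W Fder /F !hornerE -/G -/G' -/A.
  rewrite hornerMn hornerXn -/D => /eqP; rewrite subr_eq0 => /eqP; lra.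
pose t := - A / G.
have ht : t < xi.
  apply: hP; apply: (@bez_root _ n g t c (leq_ltn_trans (leq0n _) sn) sgn).
    rewrite /root !hornerE -/G -/A /t; apply/eqP; field.
  by [].
  rewrite /root derivD derivXn derivZ !hornerE hornerMn hornerXn -/D -/G' /t.
  apply/eqP; rewrite -[D](mulfK G0) eW; field.
  by [].
have -> : H.[c] = G ^+ 2 * (xi - t).
  rewrite /H /F !hornerE -/G -/A /t; field.
  by [].
by rewrite mulr_gt0 // ?subr_gt0 // exprn_even_gt0.
Qed.

Lemma rootH z : root H z = root F z || root g z.
Proof. by rewrite /H rootM. Qed.

Lemma W0 : W != 0.
Proof. by rewrite -size_poly_eq0 (proj1 W_size_lead); lia. Qed.

Lemma sg_pm {x : R} : x != 0 -> Num.sg x = 1 \/ Num.sg x = -1.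
Proof. by case: (ltgtP x 0) => hx // _; [right; rewrite ltr0_sg | left; rewrite gtr0_sg]. Qed.

Lemma nsub : (0 : R) < n%:R - s%:R.
Proof. by rewrite subr_gt0 ltr_nat. Qed.

Lemma far_right : exists M, forall y, M <= y ->
  Num.sg W.[y] = Num.sg (lead_coef g) /\ Num.sg H.[y] = Num.sg (lead_coef g).
Proof.
exists (Num.max (cauchy_bound W) (cauchy_bound H)) => y; rewrite ge_max => /andP[hW hH].
split.
  rewrite (@sgp_pinftyP _ (cauchy_bound W)) ?in_itv /= ?hW //; last first.
    by move=> z /(ge_cauchy_bound W0).
  by rewrite /sgp_pinfty (proj2 W_size_lead) sgrM (gtr0_sg nsub) mul1r.
rewrite (@sgp_pinftyP _ (cauchy_bound H)) ?in_itv /= ?hH //; last first.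
  by move=> z /(ge_cauchy_bound H0).
by rewrite /sgp_pinfty (proj2 H_size_lead).
Qed.

Lemma far_left : exists M, forall y, y <= M ->
  Num.sg W.[y] = - Num.sg H.[y] /\ Num.sg H.[y] = sgp_minfty H.
Proof.
exists (Num.min (- cauchy_bound W) (- cauchy_bound H)) => y; rewrite le_min => /andP[hW hH].
have eH : Num.sg H.[y] = sgp_minfty H.
  rewrite (@sgp_minftyP _ (- cauchy_bound H)) ?in_itv /= ?hH //.
  by move=> z /(le_cauchy_bound H0).
split => //.
rewrite (@sgp_minftyP _ (- cauchy_bound W)) ?in_itv /= ?hW //; last first.
  by move=> z /(le_cauchy_bound W0).
rewrite eH /sgp_minfty (proj1 W_size_lead) (proj2 W_size_lead).
rewrite (proj1 H_size_lead) (proj2 H_size_lead) /=.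
have -> : (n + s)%N = (n + s).-1.+1 by lia.
rewrite exprS !sgrM (gtr0_sg nsub) /= sgrN1; ring.
Qed.

Lemma noWroot {c} : root W c -> Num.sg H.[c] = -1 -> False.
Proof.
move=> rW hc; have [g0c|gc] := eqVneq g.[c] 0.
  by move: hc; rewrite /H hornerM g0c mulr0 sgr0 => /eqP; rewrite eq_sym oppr_eq0 oner_eq0.
by move: hc; rewrite (gtr0_sg (Kpos c rW gc)) => /eqP; rewrite -subr_eq0 opprK (_ : 1 + 1 = 2%:R) // pnatr_eq0.
Qed.

Lemma core {u v} : u < v -> Num.sg W.[u] = - Num.sg W.[v] -> W.[u] != 0 ->
  (forall y, u < y < v -> Num.sg H.[y] = -1) -> False.
Proof.
move=> uv sW Wu hH.
have : W.[u] * W.[v] < 0.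
  have Wv : W.[v] != 0 by rewrite -sgr_eq0 -oppr_eq0 -sW sgr_eq0.
  rewrite -sgr_cp0 sgrM sW.
  by case: (sg_pm Wv) => ->; rewrite ?opprK ?mulr1 ?mul1r.
case/(poly_ivtoo (ltW uv)) => c; rewrite in_itv /= => cI rc.
by apply: (noWroot rc); apply: hH.
Qed.

Lemma Key_fin u v : u < v -> W.[u] != 0 -> W.[v] != 0 ->
  (forall y, u < y < v -> Num.sg H.[y] = -1) -> Num.sg W.[u] = Num.sg W.[v].
Proof.
move=> uv Wu Wv hH.
case: (sg_pm Wu) => eu; case: (sg_pm Wv) => ev; rewrite ?eu ?ev //;
  exfalso; apply: (core uv _ Wu hH); rewrite eu ev ?opprK //.
Qed.

Lemma Key_right u : W.[u] != 0 -> (forall y, u < y -> Num.sg H.[y] = -1) ->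
  Num.sg W.[u] = -1.
Proof.
move=> Wu hH; case: (sg_pm Wu) => // eu; exfalso.
have [M hM] := far_right.
set y := Num.max M (u + 1).
have uy : u < y by rewrite lt_max ltrDl ltr01 orbT.
have My : M <= y by rewrite le_max lexx.
have [e1 e2] := hM y My.
apply: (core uy _ Wu).
  by rewrite eu e1 -e2 (hH _ uy) opprK.
by move=> z /andP[hz _]; apply: hH.
Qed.

Lemma Key_left v : W.[v] != 0 -> (forall y, y < v -> Num.sg H.[y] = -1) ->
  Num.sg W.[v] = 1.
Proof.
move=> Wv hH; case: (sg_pm Wv) => // ev; exfalso.
have [M hM] := far_left.
set y := Num.min M (v - 1).
have yv : y < v by rewrite gt_min gtrDl ltrN10 orbT.
have My : y <= M by rewrite ge_min lexx.
have [e1 e2] := hM y My.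
have Wy : W.[y] != 0 by rewrite -sgr_eq0 e1 (hH _ yv) opprK oner_eq0.
apply: (core yv _ Wy).
  by rewrite e1 ev (hH _ yv) opprK.
by move=> z /andP[_ hz]; apply: hH.
Qed.

Lemma Key_none : (forall y, Num.sg H.[y] = -1) -> False.
Proof.
move=> hH.
have [M1 hM1] := far_right; have [M2 hM2] := far_left.
set y1 := Num.max M1 (M2 + 1).
have y21 : M2 < y1 by rewrite lt_max ltrDl ltr01 orbT.
have My : M1 <= y1 by rewrite le_max lexx.
have [e1 e2] := hM1 y1 My.
have [e3 e4] := hM2 M2 (lexx _).
have Wy : W.[M2] != 0 by rewrite -sgr_eq0 e3 hH opprK oner_eq0.
apply: (core y21 _ Wy).
  by rewrite e3 e1 -e2 !hH.
by move=> z _; apply: hH.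
Qed.

Lemma n1 : (1 == -1 :> R) = false.
Proof. apply/negbTE/eqP => h; lra. Qed.

Lemma sep_cop : coprimep g g^`().
Proof. by move: sepg; rewrite separable_poly.unlock. Qed.

Lemma Hder : H^`() = F^`() * g + F * g^`().
Proof. by rewrite /H derivM. Qed.

Lemma classify b : root H b -> (root F b && root g b) \/
  [/\ H^`().[b] != 0, W.[b] != 0 &
      ((root F b)%:R - (root g b)%:R : R) = Num.sg (W.[b] * H^`().[b])].
Proof.
rewrite rootH; case rF: (root F b); case rg: (root g b) => //= _; [by left| |].
- right; have d0 := noDouble b rF.
  have g0b : g.[b] != 0 by apply/negbT; rewrite -/(root g b) rg.
  have eH : H^`().[b] = F^`().[b] * g.[b].
    by rewrite Hder hornerD !hornerM (rootP rF) mul0r addr0.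
  have eW : W.[b] = F^`().[b] * g.[b].
    by rewrite /W hornerD hornerN !hornerM (rootP rF) mul0r subr0.
  have nz : F^`().[b] * g.[b] != 0 by rewrite mulf_neq0.
  rewrite eH eW nz; split => //.
  by rewrite sgrM; case: (sg_pm nz) => ->; rewrite /= ?mulr1 ?mulrNN ?mulr1 subr0.
- right; have d0 : g^`().[b] != 0 by apply: (coprimep_root sep_cop); rewrite rg.
  have F0b : F.[b] != 0 by apply/negbT; rewrite -/(root F b) rF.
  have eH : H^`().[b] = F.[b] * g^`().[b].
    by rewrite Hder hornerD !hornerM (rootP rg) mulr0 add0r.
  have eW : W.[b] = - (F.[b] * g^`().[b]).
    by rewrite /W hornerD hornerN !hornerM (rootP rg) mulr0 sub0r.
  have nz : F.[b] * g^`().[b] != 0 by rewrite mulf_neq0.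
  rewrite eH eW oppr_eq0 nz; split => //.
  by rewrite mulNr sgrN sgrM; case: (sg_pm nz) => ->; rewrite /= ?mulr1 ?mulrNN ?mulr1 sub0r.
Qed.

Lemma Zcase b : root F b -> root g b ->
  (forall y, b < y -> (forall z, b < z <= y -> ~~ root H z) -> Num.sg H.[y] = 1) /\
  (forall y, y < b -> (forall z, y <= z < b -> ~~ root H z) -> Num.sg H.[y] = 1).
Proof.
move=> rF rg.
have b0 : b = 0.
  move: rF; rewrite /root /F !hornerE (rootP rg) mulr0 addr0.
  by rewrite expf_eq0 => /andP[_ /eqP].
have dg : g^`().[b] != 0 by apply: (coprimep_root sep_cop).
have dF := noDouble b rF.
have eF : Num.sg F^`().[b] = Num.sg g^`().[b].
  rewrite Fder !hornerE hornerMn hornerXn b0 expr0n.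
  have -> : (n.-1 == 0%N) = false by apply/negbTE; lia.
  by rewrite mul0rn add0r sgrM (gtr0_sg xi_gt0) mul1r -b0.
have sq : Num.sg g^`().[b] * Num.sg g^`().[b] = 1.
  by case: (sg_pm dg) => ->; rewrite ?mulr1 ?mulrNN ?mulr1.
split => y hy nr.
- rewrite /H hornerM sgrM (sgr_right hy _ rF dF) ?(sgr_right hy _ rg dg) ?eF //.
    by move=> z /nr; rewrite rootH negb_or => /andP[].
  by move=> z /nr; rewrite rootH negb_or => /andP[].
- rewrite /H hornerM sgrM (sgr_left hy _ rF dF) ?(sgr_left hy _ rg dg) ?eF ?mulrNN //.
    by move=> z /nr; rewrite rootH negb_or => /andP[].
  by move=> z /nr; rewrite rootH negb_or => /andP[].
Qed.

Definition E : R := if Num.sg (lead_coef g) == -1 then 1 else 0.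

Lemma sweep (l : seq R) : forall (a sa om : R),
  path <%R a l ->
  (forall x, a < x -> root H x -> x \in l) ->
  all (root H) l ->
  (forall y, a < y -> (forall z, a < z <= y -> ~~ root H z) -> Num.sg H.[y] = sa) ->
  (sa = 1 \/ sa = -1) ->
  (sa = -1 -> if l is b :: _ then W.[b] != 0 -> Num.sg W.[b] = om else om = -1) ->
  (count (root F) l)%:R - (count (root g) l)%:R =
    (if sa == -1 then om else 0) + E :> R.
Proof.
elim: l => [|b l IH] a sa om pl inl alr sm spm cons.
  have [M hM] := far_right.
  set y := Num.max M (a + 1).
  have ay : a < y by rewrite lt_max ltrDl ltr01 orbT.
  have My : M <= y by rewrite le_max lexx.
  have [_ e2] := hM y My.
  have esa : sa = Num.sg (lead_coef g).
    rewrite -e2 (sm y ay) // => z /andP[az _]; apply/negP => /(inl z az).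
    by rewrite in_nil.
  rewrite /E -esa /=; case: spm => e; rewrite e; first by rewrite n1 !subrr addr0.
  by rewrite eqxx (cons e) subrr addNr.
move: pl => /= /andP[ab pl]; move: alr => /= /andP[rb alr].
have allgt : all (fun z => b < z) l := order_path_min lt_trans pl.
have inl' : forall x, b < x -> root H x -> x \in l.
  move=> x bx rx; have := inl x (lt_trans ab bx) rx.
  by rewrite in_cons => /orP[/eqP xb|//]; move: bx; rewrite xb ltxx.
have geb : forall z, a < z -> root H z -> b <= z.
  move=> z az rz; have := inl z az rz; rewrite in_cons => /orP[/eqP -> //|zl].
  by apply: ltW; move/allP: allgt => /(_ z zl).
set m := mid a b.
have [am mb] : a < m /\ m < b.
  by split; rewrite /m; lra.
have hm : Num.sg H.[m] = sa.
  apply: sm => // z /andP[az zm]; apply/negP => /(geb z az); lra.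
have nrm : forall z, m <= z < b -> ~~ root H z.
  move=> z /andP[mz zb]; apply/negP => /(geb z (lt_le_trans am mz)); lra.
have nrb : forall c y, (forall z, z \in l -> c <= z) -> b < y -> y < c ->
    forall z, b < z <= y -> ~~ root H z.
  move=> c y hc _ yc z /andP[bz zy]; apply/negP => /(inl' z bz) /hc; lra.
rewrite /= !natrD.
case: (classify b rb) => [/andP[rF rg] | [dH dW ec]].
  have [Zr Zl] := Zcase b rF rg.
  have sa1 : sa = 1 by rewrite -hm (Zl m mb nrm).
  have ne : (1 : R) = -1 -> False by move=> h; lra.
  have := IH b 1 1 pl inl' alr (Zr) (or_introl erefl) (fun h => False_ind _ (ne h)).
  rewrite n1 rF rg sa1 n1 => h; rewrite -h; ring.
have esa : sa = - Num.sg H^`().[b] by rewrite -hm (sgr_left mb nrm rb dH).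
have sm' : forall y, b < y -> (forall z, b < z <= y -> ~~ root H z) ->
    Num.sg H.[y] = Num.sg H^`().[b].
  by move=> y by' nr; apply: (sgr_right by' nr rb dH).
have cons' : Num.sg H^`().[b] = -1 ->
    if l is c :: _ then W.[c] != 0 -> Num.sg W.[c] = Num.sg W.[b] else Num.sg W.[b] = -1.
  move=> e; move: pl inl'; case: (l) => [|c l'] pl' inl2.
    apply: (Key_right b dW) => y by'; rewrite -e; apply: sm' => // z /andP[bz _].
    by apply/negP => /(inl2 z bz); rewrite in_nil.
  move=> dc; move: pl' => /= /andP[bc pc].
  have allc : all (fun z => c < z) l' := order_path_min lt_trans pc.
  symmetry; apply: (Key_fin b c bc dW dc) => y /andP[by' yc]; rewrite -e.
  apply: sm' => // z /andP[bz zy]; apply/negP => /(inl2 z bz).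
  rewrite in_cons => /orP[/eqP zc|zl]; first by move: zy; rewrite zc; lra.
  by move/allP: allc => /(_ z zl); lra.
have IH' := IH b (Num.sg H^`().[b]) (Num.sg W.[b]) pl inl' alr sm' (sg_pm dH) cons'.
rewrite sgrM in ec.
case: (sg_pm dH) => e; rewrite e in IH' ec esa; rewrite esa.
  rewrite n1 in IH'; rewrite eqxx.
  have ew := cons esa dW.
  lra.
rewrite eqxx in IH'; rewrite opprK n1; lra.
Qed.

Lemma count_eq : (count (root F) (rootsR H))%:R - (count (root g) (rootsR H))%:R =
  (if sgp_minfty H == -1 then 1 else 0) + E :> R.
Proof.
set a := - cauchy_bound H.
have na : forall x, x \in `]-oo, a] -> ~~ root H x := le_cauchy_bound H0.
have hmin : forall y, y <= a -> Num.sg H.[y] = sgp_minfty H.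
  by move=> y ya; apply: (sgp_minftyP na); rewrite in_itv.
have inl : forall x, a < x -> root H x -> x \in rootsR H.
  by move=> x _ rx; rewrite -(roots_on_rootsR H0 x) rx.
have sm : forall y, a < y -> (forall z, a < z <= y -> ~~ root H z) ->
    Num.sg H.[y] = sgp_minfty H.
  move=> y ay nr; rewrite -(hmin a (lexx a)).
  apply: (polyrN0_itv (i := `[a, y]) (p := H)).
  - move=> z; rewrite in_itv /= => /andP[az zy].
    have [<-|az'] := eqVneq a z; first by apply: na; rewrite in_itv /= lexx.
    by apply: nr; rewrite zy andbT lt_neqAle az' az.
  - by rewrite in_itv /= ?lexx ?(ltW ay).
  - by rewrite in_itv /= ?lexx ?(ltW ay).
have spm : sgp_minfty H = 1 \/ sgp_minfty H = -1.
  apply: sg_pm; rewrite mulf_neq0 ?lead_coef_eq0 ?H0 //.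
  by rewrite expf_neq0 // oppr_eq0 oner_eq0.
have alr : all (root H) (rootsR H) by apply/allP => x; apply: root_roots.
have pr : path <%R a (rootsR H) := path_roots H a (cauchy_bound H).
apply: (@sweep (rootsR H) a _ 1 pr inl alr sm spm).
move=> e; move: pr inl; case: (rootsR H) => [|b l] pr inl2.
  exfalso; apply: Key_none => y.
  have [ya|ay] := lerP y a; first by rewrite hmin.
  rewrite -e; apply: sm => // z /andP[az _]; apply/negP => /(inl2 z az).
  by rewrite in_nil.
move=> Wb; apply: (Key_left b Wb) => y yb.
have [ya|ay] := lerP y a; first by rewrite hmin.
move: pr => /= /andP[ab pl].
have allb : all (fun z => b < z) l := order_path_min lt_trans pl.
rewrite -e; apply: sm => // z /andP[az zy]; apply/negP => /(inl2 z az).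
rewrite in_cons => /orP[/eqP zb|zl]; first by move: zy; rewrite zb; lra.
by move/allP: allb => /(_ z zl); lra.
Qed.

End Main.


Theorem theorem5p2 (R : rcfType) (n s gamma : nat) (g : {poly R}) :
  (1 <= s)%N -> (s < n)%N ->
  size g = s.+1 ->
  separable_poly g ->
  num_real_roots g gamma ->
  forall xi : R, (forall a : R, root (P_r n g) a -> a < xi) ->
  num_real_roots ('X^n + xi *: g)
    (if odd (n - s) then gamma.+1
     else if 0 < lead_coef g then gamma else gamma.+2).
Proof.
move=> s1 sn sg sepg [s0 [u0 hs0 z0]] xi hP.
have ce := count_eq R n s g xi s1 sn sg hP sepg.
have H0' := H0 R n s g xi sn sg.
have [sH lH] := H_size_lead R n s g xi sn sg.
have r0 := rs0 R s g sg.
set F := 'X^n + xi *: g in ce sH lH H0' *.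
set H := F * g in ce sH lH H0' *.
set zs := rootsR H in ce.
have inzs : forall x, root H x -> x \in zs.
  by move=> x rx; rewrite -(roots_on_rootsR H0' x) rx.
have uzs : uniq zs by apply: uniq_roots.
have eg : gamma = count (root g) zs.
  rewrite -z0 -size_filter; apply: perm_size; apply: uniq_perm => //.
    exact: filter_uniq.
  move=> x; rewrite mem_filter -hs0; case rg: (root g x) => //=.
  by rewrite inzs // /H rootM rg orbT.
exists (filter (root F) zs); split.
- exact: filter_uniq.
- move=> x; rewrite mem_filter; case rf: (root F x) => //=.
  by rewrite inzs // /H rootM rf.
rewrite size_filter; apply/eqP; rewrite -(eqr_nat R); apply/eqP.
have -> : (count (root F) zs)%:R = (count (root g) zs)%:R +
    ((if sgp_minfty H == -1 then 1 else 0) + E R g :> R).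
  by rewrite -ce addrC subrK.
rewrite -eg /E /sgp_minfty sH lH /= sgrM -signr_odd oddD.
have oe : odd (n - s) = odd n (+) odd s by rewrite oddB // ltnW.
rewrite -oe.
case: (sg_pm R r0) => e.
  have -> : (0 < lead_coef g) = true by rewrite -sgr_cp0 e eqxx.
  rewrite e (n1 R); case: (odd (n - s)) => /=.
    by rewrite expr1 sgrN1 mulr1 eqxx addr0 mulrSr.
  by rewrite expr0 sgr1 mulr1 (n1 R) addr0 addr0.
have -> : (0 < lead_coef g) = false.
  by apply/negbTE; rewrite -leNgt ltW // -sgr_cp0 e eqxx.
rewrite e eqxx; case: (odd (n - s)) => /=.
  by rewrite expr1 sgrN1 mulrNN mulr1 (n1 R) add0r mulrSr.
by rewrite expr0 sgr1 mul1r eqxx !mulrSr addrA.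
Qed.
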